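(* (a) If $d\ge 3$ is odd, then $\operatorname{triv}(d,d-1)=\left\lfloor \frac{d-1}{6}\right\rfloor+1$ and $\operatorname{sign}(d,d-1)=\left\lfloor \frac{d-1}{6}\right\rfloor$. (b) If $d\ge 4$ is even, then $\operatorname{triv}(d,d-1)=\operatorname{sign}(d,d-1)=\left\lfloor \frac{d+2}{6}\right\rfloor$.
   Context: $\Bbbk$ is an algebraically closed field of characteristic $0$. For an integer $d\ge 1$, $A(d)=\Bbbk[x_1,x_2,x_3]/(x_1^d,x_2^d,x_3^d)=\bigoplus_j A(d)_j$ with its standard grading. $S_3$ acts on $A(d)$ by permuting variables. The linear map $E:A(d)_{j+1}\to A(d)_j$ is defined on the monomial basis by $E(x_1^{a_1}x_2^{a_2}x_3^{a_3})=\sum_{k=1}^{3} a_k(d-a_k)\,x_1^{a_1}\cdots x_k^{a_k-1}\cdots x_3^{a_3}$; it commutes with the $S_3$-action. $\operatorname{triv}(d,j)$ and $\operatorname{sign}(d,j)$ denote the multiplicities of the trivial and sign representations of $S_3$ in $\operatorname{Ker}(E)\cap A(d)_j$. *)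

(* Defs.v *)
From HB Require Import structures.
From mathcomp Require Import all_boot all_order all_algebra all_fingroup.
Set Implicit Arguments. Unset Strict Implicit. Unset Printing Implicit Defensive.
Import GRing.Theory.
Local Open Scope ring_scope.

(* Exponent vectors of monomials x1^a1 x2^a2 x3^a3 of A(d), 0 <= a_i < d. *)
Definition Mon (d : nat) : finType := {ffun 'I_3 -> 'I_d}.
Definition mdeg (d : nat) (m : Mon d) : nat := (\sum_(i < 3) (m i : nat))%N.

(* Number of monomials; A(d) is identified with row vectors 'rV[k]_(N d)
   of coefficients with respect to the monomial basis. *)
Definition N (d : nat) : nat := #|{: Mon d}|.
Definition mon (d : nat) (i : 'I_(N d)) : Mon d := enum_val i.

Definition lowered (d : nat) (m m' : Mon d) (l : 'I_3) : bool :=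
  (0 < (m l : nat))%N &&
  [forall t, (m' t : nat) == (if t == l then (m t : nat).-1 else m t)].

Section Defs.
Variable k : fieldType.

(* Matrix of E acting on row vectors:  E(x^m) = sum_l m_l (d - m_l) x^(m - e_l) *)
Definition Emx (d : nat) : 'M[k]_(N d) :=
  \matrix_(i, j) \sum_(l < 3)
     (if lowered (mon i) (mon j) l
      then (((mon i l : nat) * (d - mon i l))%N)%:R else 0).

(* Row space = A(d)_j, the span of monomials of degree j *)
Definition Amx (d j : nat) : 'M[k]_(N d) :=
  diag_mx (\row_i ((mdeg (mon i) == j)%:R : k)).

(* S_3 permuting the variables: s sends x_t to x_(s t) *)
Definition act (d : nat) (s : 'S_3) (m : Mon d) : Mon d := [ffun t => m (s^-1 t)%g].
Definition Pmx (d : nat) (s : 'S_3) : 'M[k]_(N d) :=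
  \matrix_(i, j) ((mon j == act s (mon i))%:R).

Definition KerEj (d j : nat) : 'M[k]_(N d) := (kermx (Emx d) :&: Amx d j)%MS.

(* multiplicity of the trivial rep = dim of the S_3-invariant subspace *)
Definition triv (d j : nat) : nat :=
  \rank (KerEj d j :&: \bigcap_(s : 'S_3) kermx (Pmx d s - 1%:M))%MS.

(* multiplicity of the sign rep = dim of the sign-isotypic subspace *)
Definition sign (d j : nat) : nat :=
  \rank (KerEj d j :&: \bigcap_(s : 'S_3) kermx (Pmx d s - ((-1) ^+ odd_perm s)%:M))%MS.
End Defs.

(* Main.v *)
From Pilot Require Import Defs.
From HB Require Import structures.
From mathcomp Require Import all_boot all_order all_algebra all_fingroup.
From mathcomp Require zify.

Module Aux.
Import zify.
Set Implicit Arguments. Unset Strict Implicit. Unset Printing Implicit Defensive.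
Import GRing.Theory.
Local Open Scope ring_scope.


Local Notation act := Pilot.Defs.act.
Definition i0 : 'I_3 := @Ordinal 3 0 isT.
Definition i1 : 'I_3 := @Ordinal 3 1 isT.
Definition i2 : 'I_3 := @Ordinal 3 2 isT.
Lemma ord3P (P : 'I_3 -> Prop) : P i0 -> P i1 -> P i2 -> forall i, P i.
Proof. by move=> H0 H1 H2 [[|[|[|i]]] Hi] //; [have -> : Ordinal Hi = i0 | have -> : Ordinal Hi = i1 | have -> : Ordinal Hi = i2]; try apply: val_inj. Qed.
Lemma sum3 (V : nmodType) (F : 'I_3 -> V) : \sum_(l < 3) F l = F i0 + F i1 + F i2.
Proof. by rewrite !big_ord_recr big_ord0 /= add0r; congr (F _ + F _ + F _); apply: val_inj. Qed.
Lemma sort3 (f : 'I_3 -> nat) : exists p : 'S_3, ((f (p i1) <= f (p i0)) && (f (p i2) <= f (p i1)))%N.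
Proof.
case: (leqP (f i1) (f i0)) => h01; case: (leqP (f i2) (f i1)) => h12;
  case: (leqP (f i2) (f i0)) => h02;
  first [ by exists 1%g; rewrite !perm1; lia
        | by exists (tperm i1 i2); rewrite !permE /=; lia
        | by exists (tperm i0 i1); rewrite !permE /=; lia
        | by exists (tperm i0 i2); rewrite !permE /=; lia
        | by exists (tperm i1 i2 * tperm i0 i2)%g; rewrite !permM !permE /=; lia
        | by exists (tperm i0 i2 * tperm i1 i2)%g; rewrite !permM !permE /=; lia
        | lia ].
Qed.

Lemma rank_diag (F : fieldType) n (r : 'rV[F]_n) :
  \rank (diag_mx r) = #|[pred i | r 0 i != 0]|.
Proof.
have H := @mxdirect_delta F _ [pred i | r 0 i != 0] n id (in2W (@inj_id _)).
move/mxdirectP: H => /= H.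
have -> : \rank (diag_mx r) = \rank (\sum_(i | r 0 i != 0) <<delta_mx 0 i : 'rV[F]_n>>)%MS.
  apply/eqmx_rank/andP; split.
    apply/row_subP => i; rewrite row_diag_mx.
    have [->|nz] := eqVneq (r 0 i) 0; first by rewrite scale0r sub0mx.
    apply: scalemx_sub; apply: (sumsmx_sup i) => //; by rewrite genmxE.
  apply/sumsmx_subP => i nz; rewrite genmxE.
  have -> : delta_mx 0 i = (r 0 i)^-1 *: row i (diag_mx r) :> 'rV[F]_n.
    by rewrite row_diag_mx scalerA mulVf // scale1r.
  by apply: scalemx_sub; apply: row_sub.
rewrite H -sum1_card; apply: eq_bigr => i _; by rewrite mxrank_gen mxrank_delta.
Qed.

Ltac lia3 m := repeat match goal with H : context [m] |- _ => revert H end;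
  move: (m i0) (m i1) (m i2) => ? ? ?; intros; lia.
Ltac lia6 x y := repeat match goal with H : context [x] |- _ => revert H | H : context [y] |- _ => revert H end;
  move: (x i0) (x i1) (x i2) (y i0) (y i1) (y i2) => ? ? ? ? ? ?; intros; lia.
Section Work.
Variable k : fieldType.
Variable d : nat.
Local Notation n := (N d).

Definition idx (m : Mon d) : 'I_n := enum_rank m.
Lemma monK i : idx (mon i) = i. Proof. exact: enum_valK. Qed.
Lemma idxK m : mon (idx m) = m. Proof. exact: enum_rankK. Qed.

Definition ev (m : Mon d) : 'rV[k]_n := delta_mx 0 (idx m).

Lemma rowM_ev i (A : 'M[k]_n) : row i A = ev (mon i) *m A.
Proof. by rewrite rowE /ev monK. Qed.

Lemma rows_eqP (A B : 'M[k]_n) : (forall m, ev m *m A = ev m *m B) -> A = B.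
Proof. by move=> H; apply/row_matrixP => i; rewrite !rowM_ev H. Qed.

Lemma ev_Pmx s m : ev m *m Pmx k d s = ev (act s m).
Proof.
rewrite /ev -rowE; apply/rowP => j; rewrite !mxE idxK eqxx /=.
by rewrite -{1}(idxK (act s m)) (can_eq monK).
Qed.

Lemma actM s t (m : Mon d) : act (s * t)%g m = act t (act s m).
Proof. by apply/ffunP => x; rewrite !ffunE invMg permM. Qed.

Lemma PmxM s t : Pmx k d s *m Pmx k d t = Pmx k d (s * t)%g.
Proof. by apply: rows_eqP => m; rewrite mulmxA !ev_Pmx actM. Qed.

Lemma mdegE (m : Mon d) : mdeg m = (m i0 + m i1 + m i2)%N.
Proof. by rewrite /mdeg !big_ord_recr big_ord0 /=; congr (_ + _ + _)%N; congr (nat_of_ord (m _)); apply: val_inj. Qed.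

Lemma mdeg_act s (m : Mon d) : mdeg (act s m) = mdeg m.
Proof.
rewrite /mdeg (reindex_inj (@perm_inj _ s)) /=.
by apply: eq_bigr => i _; rewrite ffunE permK.
Qed.

Lemma ev_Amx j m : ev m *m Amx k d j = ((mdeg m == j)%:R : k) *: ev m.
Proof.
rewrite /ev -rowE /Amx row_diag_mx mxE idxK.
by [].
Qed.

Lemma PmxA s j : Pmx k d s *m Amx k d j = Amx k d j *m Pmx k d s.
Proof.
apply: rows_eqP => m; rewrite !mulmxA ev_Pmx !ev_Amx -scalemxAl ev_Pmx.
by rewrite mdeg_act.
Qed.


Definition lowerv (x : 'I_d) : 'I_d := Ordinal (leq_ltn_trans (leq_pred x) (ltn_ord x)).
Definition lower (m : Mon d) (l : 'I_3) : Mon d :=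
  [ffun t => if t == l then lowerv (m t) else m t].
Definition coef (m : Mon d) (l : 'I_3) : k := ((m l * (d - m l))%N)%:R.

Lemma loweredE (m m' : Mon d) l : lowered m m' l = (0 < m l)%N && (m' == lower m l).
Proof.
rewrite /lowered; congr (_ && _); apply/forallP/eqP => [H|->].
  apply/ffunP => t; apply/val_inj => /=; rewrite ffunE (eqP (H t)).
  by case: (t == l).
by move=> t; rewrite ffunE; case: (t == l).
Qed.

Lemma ev_Emx m : ev m *m Emx k d =
  \sum_(l < 3) (if (0 < m l)%N then coef m l *: ev (lower m l) else 0).
Proof.
rewrite /ev -rowE; apply/rowP => j; rewrite !mxE summxE; apply: eq_bigr => l _.
rewrite idxK loweredE; case: (0 < m l)%N; rewrite /= ?mxE //.
rewrite -{1}(idxK (lower m l)) (can_eq monK) eqxx /=.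
by case: (j == idx (lower m l)); rewrite ?mulr1 ?mulr0.
Qed.

Lemma lower_act s (m : Mon d) l : lower (act s m) (s l) = act s (lower m l).
Proof.
apply/ffunP => t; rewrite !ffunE.
have -> : (t == s l) = ((s^-1)%g t == l).
  by apply/eqP/eqP => [->|<-]; rewrite ?permK ?permKV.
by case: ifP.
Qed.

Lemma PmxE s : Pmx k d s *m Emx k d = Emx k d *m Pmx k d s.
Proof.
apply: rows_eqP => m; rewrite !mulmxA ev_Pmx !ev_Emx mulmx_suml.
rewrite [LHS](reindex_inj (@perm_inj _ s)) /=; apply: eq_bigr => l _.
have -> : act s m (s l) = m l by rewrite ffunE permK.
case: ifP => _; last by rewrite mul0mx.
by rewrite -scalemxAl ev_Pmx /coef !ffunE permK lower_act.
Qed.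


Definition chi (b : bool) (s : 'S_3) : k := if b then (-1) ^+ odd_perm s else 1.
Lemma chiM b s t : chi b (s * t)%g = chi b s * chi b t.
Proof. by case: b; rewrite /chi ?mulr1 // odd_permM signr_addb. Qed.
Lemma chi2 b s : chi b s * chi b s = 1.
Proof. by case: b; rewrite /chi ?mulr1 // -signr_addb addbb. Qed.

Definition Rmx b : 'M[k]_n := \sum_(s : 'S_3) chi b s *: Pmx k d s.
Definition Inv b : 'M[k]_n := (\bigcap_(s : 'S_3) kermx (Pmx k d s - (chi b s)%:M))%MS.

Lemma PmxR b t : Pmx k d t *m Rmx b = chi b t *: Rmx b.
Proof.
rewrite /Rmx mulmx_sumr scaler_sumr [RHS](reindex_inj (mulgI t)) /=.
apply: eq_bigr => s _; rewrite -scalemxAr PmxM scalerA chiM mulrA chi2 mul1r.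
by [].
Qed.

Lemma RPmx b t : Rmx b *m Pmx k d t = chi b t *: Rmx b.
Proof.
rewrite /Rmx mulmx_suml scaler_sumr [RHS](reindex_inj (mulIg t)) /=.
apply: eq_bigr => s _; rewrite -scalemxAl PmxM scalerA chiM; congr (_ *: _).
by rewrite mulrCA chi2 mulr1.
Qed.

Lemma sub_Inv m' b (A : 'M[k]_(m', n)) :
  (A <= Inv b)%MS <-> (forall s, A *m Pmx k d s = chi b s *: A).
Proof.
split=> [/sub_bigcapmxP H s | H].
  by move/sub_kermxP: (H s isT); rewrite mulmxBr mul_mx_scalar => /eqP; rewrite subr_eq0 => /eqP.
apply/sub_bigcapmxP => s _; apply/sub_kermxP.
by rewrite mulmxBr mul_mx_scalar H subrr.
Qed.

Lemma Inv_R m' b (A : 'M[k]_(m', n)) : (A <= Inv b)%MS -> A *m Rmx b = 6%:R *: A.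
Proof.
move/sub_Inv => H; rewrite /Rmx mulmx_sumr.
rewrite (eq_bigr (fun _ => A)); last by move=> s _; rewrite -scalemxAr H scalerA chi2 scale1r.
by rewrite sumr_const card_Sn scaler_nat.
Qed.

Lemma RmxA b j : Rmx b *m Amx k d j = Amx k d j *m Rmx b.
Proof.
rewrite /Rmx mulmx_suml mulmx_sumr; apply: eq_bigr => s _.
by rewrite -scalemxAl -scalemxAr PmxA.
Qed.

Lemma RmxE b : Rmx b *m Emx k d = Emx k d *m Rmx b.
Proof.
rewrite /Rmx mulmx_suml mulmx_sumr; apply: eq_bigr => s _.
by rewrite -scalemxAl -scalemxAr PmxE.
Qed.

Lemma AmxK j : Amx k d j *m Amx k d j = Amx k d j.
Proof.
apply: rows_eqP => m; rewrite mulmxA ev_Amx -scalemxAl ev_Amx scalerA.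
by case: (mdeg m == j); rewrite ?mulr1 ?mulr0.
Qed.

Definition Xmx b j := Amx k d j *m Rmx b.

Lemma capInvE b j : (6%:R : k) != 0 -> (Amx k d j :&: Inv b :=: Xmx b j)%MS.
Proof.
move=> h6; apply/eqmxP/andP; split; last first.
  rewrite sub_capmx; apply/andP; split.
    by rewrite /Xmx -RmxA submxMl.
  apply/sub_Inv => s; by rewrite /Xmx -mulmxA RPmx scalemxAr.
set C := (Amx k d j :&: Inv b)%MS.
have CA : C *m Amx k d j = C.
  have /submxP [D ->] : (C <= Amx k d j)%MS by apply: capmxSl.
  by rewrite -mulmxA AmxK.
have CR : C *m Rmx b = 6%:R *: C by apply: Inv_R; apply: capmxSr.
have -> : C = (6%:R : k)^-1 *: (C *m Rmx b) by rewrite CR scalerA mulVf // scale1r.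
by apply: scalemx_sub; rewrite -{1}CA -mulmxA submxMl.
Qed.

Lemma rank_formula b j : (6%:R : k) != 0 ->
  (Amx k d j *m Emx k d :=: Amx k d j.-1)%MS ->
  (\rank (KerEj k d j :&: Inv b) + \rank (Xmx b j.-1) = \rank (Xmx b j))%N.
Proof.
move=> h6 surj.
rewrite /KerEj -capmxA capmxC -(capInvE b j h6) -[RHS](mxrank_mul_ker _ (Emx k d)).
rewrite addnC; congr (_ + _)%N.
rewrite (eqmxMr _ (capInvE b j h6)) /Xmx -mulmxA RmxE mulmxA.
by rewrite (eqmxMr _ surj).
Qed.


Hypothesis hk : [pchar k] =i pred0.
Lemma natr_neq0 (x : nat) : (0 < x)%N -> (x%:R : k) != 0.
Proof. by move=> hx; rewrite ((pcharf0P k).1 hk x) -lt0n. Qed.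

Lemma ev_sub_Amx m j : mdeg m = j -> (ev m <= Amx k d j)%MS.
Proof.
move=> H; have E : ev m *m Amx k d j = ev m by rewrite ev_Amx H eqxx scale1r.
by rewrite -E submxMl.
Qed.

Lemma mdeg_lower (m : Mon d) l : (0 < m l)%N -> mdeg (lower m l) = (mdeg m).-1.
Proof.
move: l; apply: ord3P => h; rewrite !mdegE /lower !ffunE /=; move: h; move: (m i0) (m i1) (m i2) => x y z h; lia.
Qed.

Lemma surj_sub1 : (Amx k d d.-1 *m Emx k d <= Amx k d d.-2)%MS.
Proof.
apply/row_subP => i; rewrite rowM_ev mulmxA ev_Amx -scalemxAl.
case: eqP => hdeg; last by rewrite scale0r sub0mx.
rewrite scale1r ev_Emx; apply: summx_sub => l _; case: ifP => h; last by rewrite sub0mx.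
by apply: scalemx_sub; apply: ev_sub_Amx; rewrite mdeg_lower // hdeg.
Qed.

Definition raise (b : Mon d) : Mon d :=
  [ffun x => if x == i0 then insubd (b x) (b x).+1 else b x].

Lemma surj_key (d2 : (2 <= d)%N) t : forall b : Mon d, mdeg b = d.-2 -> (d - b i0 = t)%N ->
  (ev b <= Amx k d d.-1 *m Emx k d)%MS.
Proof.
elim: t => [|t IH] b hb ht; first by have := ltn_ord (b i0); rewrite mdegE in hb; lia3 b.
set a := raise b.
have hb0 : ((b i0).+1 < d)%N by rewrite mdegE in hb; lia3 b.
have ha0 : (a i0 : nat) = (b i0).+1 by rewrite ffunE /= val_insubd hb0.
have ha1 : a i1 = b i1 by rewrite ffunE.
have ha2 : a i2 = b i2 by rewrite ffunE.
have hadeg : mdeg a = d.-1 by rewrite mdegE ha0 ha1 ha2; rewrite mdegE in hb; lia3 b.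
have hlow : lower a i0 = b.
  apply/ffunP; apply: ord3P; apply: val_inj; rewrite ffunE /= ?ha0 //.
    by rewrite ha1.
  by rewrite ha2.
have hS : (ev a *m Emx k d <= Amx k d d.-1 *m Emx k d)%MS.
  by apply: submxMr; apply: ev_sub_Amx.
rewrite ev_Emx sum3 ha0 /= hlow in hS.
have hT : forall l, l != i0 -> ((if (0 < a l)%N then coef a l *: ev (lower a l) else 0)
      <= Amx k d d.-1 *m Emx k d)%MS.
  move=> l hl; case: ifP => hpos; last by rewrite sub0mx.
  apply: scalemx_sub; apply: (IH); first by rewrite mdeg_lower // hadeg; lia.
  rewrite /lower ffunE eq_sym (negbTE hl) ha0; lia.
have hc : coef a i0 != 0 by rewrite /coef natr_neq0 // ha0 muln_gt0 /=; lia3 b.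
have H1 := hT i1 isT; have H2 := hT i2 isT.
set T1 := (if (0 < a i1)%N then _ else _) in hS H1.
set T2 := (if (0 < a i2)%N then _ else _) in hS H2.
have : (coef a i0 *: ev b <= Amx k d d.-1 *m Emx k d)%MS.
  have -> : coef a i0 *: ev b = (coef a i0 *: ev b + T1 + T2) - T2 - T1 by rewrite !addrK.
  by apply: addmx_sub; [apply: addmx_sub|]; rewrite // eqmx_opp.
move/(scalemx_sub (coef a i0)^-1); by rewrite scalerA mulVf // scale1r.
Qed.

Lemma surj (d2 : (2 <= d)%N) : (Amx k d d.-1 *m Emx k d :=: Amx k d d.-2)%MS.
Proof.
apply/eqmxP/andP; split; first exact: surj_sub1.
apply/row_subP => i; rewrite rowM_ev ev_Amx.
case: eqP => h; last by rewrite scale0r sub0mx.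
by rewrite scale1r; apply: (surj_key d2 h).
Qed.


Definition wsorted (m : Mon d) := ((m i1 : nat) <= m i0)%N && ((m i2 : nat) <= m i1)%N.
Definition ssorted (m : Mon d) := ((m i1 : nat) < m i0)%N && ((m i2 : nat) < m i1)%N.
Definition Dp b j (m : Mon d) := (mdeg m == j) && (if b then ssorted m else wsorted m).

Lemma exists_sort (m : Mon d) : exists s, wsorted (act s m).
Proof.
have [p hp] := sort3 (fun i => m i).
by exists p^-1%g; rewrite /wsorted !ffunE invgK.
Qed.

Definition mxv (m : Mon d) := \max_(i < 3) (m i : nat).
Definition mnv (m : Mon d) := \max_(i < 3) (d - m i)%N.

Lemma max3 (F : 'I_3 -> nat) : \max_(i < 3) F i = maxn (maxn (F i0) (F i1)) (F i2).
Proof. by rewrite !big_ord_recr big_ord0 /= max0n; congr (maxn (maxn (F _) (F _)) (F _)); apply: val_inj. Qed.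

Lemma mxv_act s (m : Mon d) : mxv (act s m) = mxv m.
Proof.
rewrite /mxv (reindex_inj (@perm_inj _ s)) /=.
by apply: eq_bigr => i _; rewrite ffunE permK.
Qed.

Lemma mnv_act s (m : Mon d) : mnv (act s m) = mnv m.
Proof.
rewrite /mnv (reindex_inj (@perm_inj _ s)) /=.
by apply: eq_bigr => i _; rewrite ffunE permK.
Qed.

Lemma sorted_uniq s (m : Mon d) : wsorted m -> wsorted (act s m) -> act s m = m.
Proof.
move=> hm hm'; have h1 := mdeg_act s m; have h2 := mxv_act s m; have h3 := mnv_act s m.
move: hm' h1 h2 h3; set m' := act s m; clearbody m' => hm' h1 h2 h3.
rewrite /mxv /mnv !max3 !mdegE in h1 h2 h3.
move: hm hm'; rewrite /wsorted => /andP [a1 a2] /andP [b1 b2].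
have l0 := ltn_ord (m i0); have l1 := ltn_ord (m i1); have l2 := ltn_ord (m i2).
have l0' := ltn_ord (m' i0); have l1' := ltn_ord (m' i1); have l2' := ltn_ord (m' i2).
have e0 : (m' i0 : nat) = m i0 by lia3 m'.
have e2 : (m' i2 : nat) = m i2 by lia3 m'.
have e1 : (m' i1 : nat) = m i1 by lia3 m'.
by apply/ffunP; apply: ord3P; apply: val_inj.
Qed.

Lemma act1 (m : Mon d) : act 1%g m = m.
Proof. by apply/ffunP => t; rewrite ffunE invg1 perm1. Qed.

Lemma ssorted_inj (m : Mon d) : ssorted m -> injective (fun i => m i).
Proof.
case/andP => h1 h2 x y; move: x y; apply: ord3P; apply: ord3P => //= /(congr1 val) /= e;
  lia3 m.
Qed.

Lemma stab_ssorted s (m : Mon d) : ssorted m -> (act s m == m) = (s == 1%g).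
Proof.
move=> hs; apply/eqP/eqP => [h|->]; last exact: act1.
apply/permP => t; rewrite perm1.
have := congr1 (fun f : Mon d => f t) h; rewrite /= ffunE => /(ssorted_inj hs) e.
by rewrite -{1}e permKV.

Qed.

Lemma ssortedW (m : Mon d) : ssorted m -> wsorted m.
Proof. by case/andP => h1 h2; apply/andP; split; apply: ltnW. Qed.

Lemma row_rel b s m : ev m *m Rmx b = chi b s *: (ev (act s m) *m Rmx b).
Proof.
have := congr1 (mulmx (ev m)) (PmxR b s); rewrite mulmxA ev_Pmx -scalemxAr => ->.
by rewrite scalerA chi2 scale1r.
Qed.

Lemma sign_zero (m : Mon d) : wsorted m -> ~~ ssorted m -> ev m *m Rmx true = 0.
Proof.
move=> hw hns.
have [t [ht hodd]] : exists t, act t m = m /\ odd_perm t.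
  move: hw hns; rewrite /wsorted /ssorted => /andP [a1 a2] hns.
  case: (eqVneq (m i0 : nat) (m i1)) => h.
    exists (tperm i0 i1); split; last by rewrite odd_tperm.
    apply/ffunP; apply: ord3P; rewrite ffunE tpermV permE /=; apply/val_inj => //=.
  have h' : (m i1 : nat) = m i2 by move/eqP: h => h; move: hns; rewrite negb_and -!leqNgt => /orP [c|c]; lia3 m.
  exists (tperm i1 i2); split; last by rewrite odd_tperm.
  apply/ffunP; apply: ord3P; rewrite ffunE tpermV permE /=; apply/val_inj => //=.
have H := row_rel true t m; rewrite ht /chi hodd expr1 scaleN1r in H.
have : (2%:R : k) *: (ev m *m Rmx true) = 0 by rewrite scaler_nat mulr2n {1}H addNr.
by move/eqP; rewrite scaler_eq0 (negbTE (natr_neq0 _)) //= => /eqP.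
Qed.

Definition Dmx b j : 'M[k]_n := diag_mx (\row_i ((Dp b j (mon i))%:R : k)).

Lemma ev_diag (r : 'rV[k]_n) m : ev m *m diag_mx r = r 0 (idx m) *: ev m.
Proof. by rewrite /ev -rowE row_diag_mx. Qed.

Lemma ev_Dmx b j m : ev m *m Dmx b j = ((Dp b j m)%:R : k) *: ev m.
Proof. by rewrite ev_diag mxE idxK. Qed.

Lemma X_sub_DR b j : (Xmx b j <= Dmx b j *m Rmx b)%MS.
Proof.
apply/row_subP => i; rewrite rowM_ev /Xmx mulmxA ev_Amx -scalemxAl.
case: eqP => hdeg; last by rewrite scale0r sub0mx.
rewrite scale1r; have [s hs] := exists_sort (mon i).
rewrite (row_rel b s); apply: scalemx_sub.
set m' := act s (mon i); have hdeg' : mdeg m' = j by rewrite mdeg_act.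
case hD: (Dp b j m').
  have <- : ev m' *m Dmx b j = ev m' by rewrite ev_Dmx hD scale1r.
  by rewrite -mulmxA submxMl.
move: hD; rewrite /Dp hdeg' eqxx /=; case: b => /= hD; last by rewrite hs in hD.
by rewrite (sign_zero hs (negbT hD)) sub0mx.
Qed.

Lemma DR_sub_X b j : (Dmx b j *m Rmx b <= Xmx b j)%MS.
Proof.
have DA : Dmx b j *m Amx k d j = Dmx b j.
  apply: rows_eqP => m; rewrite mulmxA ev_Dmx -scalemxAl ev_Amx scalerA.
  by case hD: (Dp b j m); rewrite ?mul0r //; move: hD; rewrite /Dp => /andP [/eqP -> _]; rewrite eqxx mulr1.
by rewrite /Xmx -DA -mulmxA submxMl.
Qed.

Definition cst b (m : Mon d) : k := \sum_(s : 'S_3) chi b s * ((act s m == m)%:R).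

Lemma cst_neq0 b j m : Dp b j m -> cst b m != 0.
Proof.
case/andP => _; case: b => hs; rewrite /cst.
  rewrite (eq_bigr (fun s => chi true s * ((s == 1%g)%:R))); last by move=> s _; rewrite stab_ssorted.
  rewrite (bigD1 1%g) //= big1 ?addr0; first by rewrite eqxx mulr1 /chi odd_perm1 expr0 oner_neq0.
  by move=> s /negbTE ->; rewrite mulr0.
rewrite (eq_bigr (fun s => ((act s m == m) : nat)%:R)); last by move=> s _; rewrite /chi mul1r.
rewrite -natr_sum natr_neq0 // (bigD1 1%g) //= act1 eqxx; lia.
Qed.

Lemma DRD b j m : ev m *m (Dmx b j *m Rmx b *m Dmx b j) =
   (((Dp b j m)%:R : k) * cst b m) *: ev m.
Proof.
rewrite !mulmxA ev_Dmx -!scalemxAl -scalerA.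
case hD : (Dp b j m); last by rewrite !scale0r.
rewrite !scale1r.
rewrite /Rmx mulmx_sumr mulmx_suml /cst scaler_suml; apply: eq_bigr => s _.
rewrite -scalemxAr -scalemxAl ev_Pmx ev_Dmx scalerA.
have [e|ne] := eqVneq (act s m) m; first by rewrite e hD.
case hD' : (Dp b j (act s m)); last by rewrite (_ : (false%:R : k) = 0) // !mulr0 !scale0r.
exfalso; move/negP: ne; apply; apply/eqP; apply: sorted_uniq.
  by move: hD' hD; rewrite /Dp; case: b => _ /andP [_ h] //; apply: ssortedW.
by move: hD hD'; rewrite /Dp; case: b => _ /andP [_ h] //; apply: ssortedW.
Qed.

Lemma rank_X b j : (6%:R : k) != 0 ->
  \rank (Xmx b j) = #|[pred i : 'I_n | Dp b j (mon i)]|.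
Proof.
move=> h6.
have eX : \rank (Xmx b j) = \rank (Dmx b j *m Rmx b).
  by apply/eqmx_rank/andP; split; [apply: X_sub_DR | apply: DR_sub_X].
have rD : \rank (Dmx b j) = #|[pred i : 'I_n | Dp b j (mon i)]|.
  rewrite rank_diag; apply: eq_card => i; rewrite !inE mxE.
  by case: (Dp b j (mon i)); rewrite ?oner_neq0 ?eqxx.
have rDRD : \rank (Dmx b j *m Rmx b *m Dmx b j) = #|[pred i : 'I_n | Dp b j (mon i)]|.
  have -> : Dmx b j *m Rmx b *m Dmx b j =
     diag_mx (\row_i (((Dp b j (mon i))%:R : k) * cst b (mon i))).
    by apply: rows_eqP => m; rewrite DRD ev_diag mxE idxK.
  rewrite rank_diag; apply: eq_card => i; rewrite !inE mxE.
  case hD: (Dp b j (mon i)); last by rewrite mul0r eqxx.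
  by rewrite mul1r (cst_neq0 hD).
rewrite eX; apply/eqP; rewrite eqn_leq; apply/andP; split.
  by rewrite -rD mxrankM_maxl.
by rewrite -rDRD mxrankM_maxl.
Qed.

End Work.

Section Count.
Variable d : nat.
Local Open Scope nat_scope.
Local Notation n := (N d).

Lemma card_mon (P : pred (Mon d)) : #|[pred i : 'I_n | P (mon i)]| = #|[set m | P m]|.
Proof.
rewrite cardsE -(card_image (can_inj (@idxK d))); apply: eq_card => i.
by rewrite inE -[X in _ = (X \in _)]monK mem_image ?inE //; exact: can_inj (@idxK d).
Qed.

Lemma sum_interval lo hi D :
  (\sum_(0 <= a < D) ((lo <= a) && (a <= hi) : nat))%N = (minn D hi.+1 - lo)%N.
Proof.
elim: D => [|D IH]; first by rewrite big_geq.
rewrite big_nat_recr //= IH; case: (leqP lo D) => h1; case: (leqP D hi) => h2 /=; lia.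
Qed.

Lemma card_interval lo hi : (hi < d)%N ->
  #|[set a : 'I_d | (lo <= a) && (a <= hi)]| = (hi.+1 - lo)%N.
Proof.
move=> hd; rewrite -sum1_card big_mkcond /=.
rewrite (eq_bigr (fun a : 'I_d => ((lo <= a) && (a <= hi) : nat))); last by move=> a _; rewrite inE; case: (_ && _).
rewrite -(big_mkord xpredT (fun a => ((lo <= a) && (a <= hi) : nat))) sum_interval; lia.
Qed.

Lemma DpE b j (m : Mon d) : Dp b j m =
  [&& (m i0 + m i1 + m i2 == j)%N, (m i1 + b <= m i0)%N & (m i2 + b <= m i1)%N].
Proof. by rewrite /Dp mdegE; case: b; rewrite /ssorted /wsorted ?addn0 ?addn1. Qed.

Lemma raise0 (m : Mon d) : ((m i0).+1 < d)%N -> (raise m i0 : nat) = (m i0).+1.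
Proof. by move=> h; rewrite ffunE /= val_insubd h. Qed.
Lemma raise1 (m : Mon d) : raise m i1 = m i1. Proof. by rewrite ffunE. Qed.
Lemma raise2 (m : Mon d) : raise m i2 = m i2. Proof. by rewrite ffunE. Qed.
Lemma lower0 (m : Mon d) : (lower m i0 i0 : nat) = (m i0).-1. Proof. by rewrite ffunE. Qed.
Lemma lower1 (m : Mon d) : lower m i0 i1 = m i1. Proof. by rewrite ffunE. Qed.
Lemma lower2 (m : Mon d) : lower m i0 i2 = m i2. Proof. by rewrite ffunE. Qed.

Lemma lower_raise (m : Mon d) : ((m i0).+1 < d)%N -> lower (raise m) i0 = m.
Proof.
move=> h; apply/ffunP; apply: ord3P; apply: val_inj; rewrite ffunE /= ?raise0 //.
  by rewrite raise1.
by rewrite raise2.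
Qed.

Lemma raise_lower (m : Mon d) : (0 < m i0)%N -> raise (lower m i0) = m.
Proof.
move=> h; have hl : (((lower m i0) i0).+1 < d)%N by rewrite lower0; have := ltn_ord (m i0); lia3 m.
apply/ffunP; apply: ord3P; apply: val_inj => /=; rewrite ?raise0 // ?raise1 ?raise2 ?lower0 ?lower1 ?lower2 //=.
lia3 m.
Qed.

Lemma count_step b j : (1 <= j)%N -> (j < d)%N ->
  #|[set m : Mon d | Dp b j m]| = (#|[set m : Mon d | Dp b j.-1 m]| +
      #|[set a : 'I_d | (2 * a + b <= j)%N && (j <= 3 * a)%N]|)%N.
Proof.
move=> hj1 hjd.
set A := [set m : Mon d | Dp b j m]; set B := [set m : Mon d | Dp b j.-1 m].
set C := [set m in A | (m i0 : nat) == (m i1 + b)%N].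
rewrite -(cardsID C A) addnC; congr (_ + _)%N.
- have -> : A :\: C = (@raise d) @: B.
    apply/setP => m; rewrite !inE; apply/idP/imsetP.
      case/andP => hC hA; exists (lower m i0); last first.
        apply/esym/raise_lower; move: hC hA; rewrite DpE; lia3 m.
      by rewrite inE DpE lower0 lower1 lower2; move: hC hA; rewrite DpE; lia3 m.
    case=> m' hB ->; move: hB; rewrite inE DpE => hB.
    have h0 : ((m' i0).+1 < d)%N by lia3 m'.
    by rewrite DpE raise0 // raise1 raise2; lia3 m'.
  rewrite card_in_imset // => x y hx hy e.
  have hx0 : ((x i0).+1 < d)%N by move: hx; rewrite inE DpE; lia3 x.
  have hy0 : ((y i0).+1 < d)%N by move: hy; rewrite inE DpE; lia3 y.
  by rewrite -(lower_raise hx0) e lower_raise.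
- have -> : A :&: C = C by apply/setIidPr; apply/subsetP => m; rewrite inE => /andP [].
  have E : [set a : 'I_d | (2 * a + b <= j)%N && (j <= 3 * a)%N] = [set (m i1 : 'I_d) | m : Mon d in C].
    apply/setP => a; rewrite inE; apply/idP/imsetP; last first.
      case=> m; rewrite !inE DpE => /andP [/eqP h0 hA] ->; lia3 m.
    move=> ha.
    pose mk := [ffun t => if t == i0 then insubd a (a + b)%N
        else if t == i1 then a else insubd a (j - (2 * a + b))%N] : Mon d.
    have v0 : (mk i0 : nat) = (a + b)%N by rewrite ffunE /= val_insubd ifT //; lia.
    have v1 : mk i1 = a by rewrite ffunE.
    have v2 : (mk i2 : nat) = (j - (2 * a + b))%N by rewrite ffunE /= val_insubd ifT //; lia.
    exists mk; last by [].
    by rewrite !inE DpE v0 v1 v2; lia.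
  rewrite E card_in_imset // => x y; rewrite !inE !DpE => hx hy /(congr1 val) /= e.
  apply/ffunP; apply: ord3P; apply: val_inj => /=; lia6 x y.
Qed.

End Count.

Lemma cnt_formula d b j : (j < d)%N -> (b <= j)%N ->
  #|[set a : 'I_d | (2 * a + b <= j)%N && (j <= 3 * a)%N]| = (((j - b) %/ 2).+1 - (j + 2) %/ 3)%N.
Proof.
move=> hjd hbj; rewrite -(@card_interval d); last by apply: leq_ltn_trans hjd; lia.
apply: eq_card => a; rewrite !inE; apply/idP/idP => /andP [h1 h2]; apply/andP; split; lia.
Qed.

Lemma main_count (k : fieldType) (hk : [pchar k] =i pred0) d b : (3 <= d)%N ->
  \rank (KerEj k d d.-1 :&: Inv k d b) = (((d.-1 - b) %/ 2).+1 - (d.-1 + 2) %/ 3)%N.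
Proof.
move=> hd.
have h6 : (6%:R : k) != 0 by apply: natr_neq0.
have F := @rank_formula k d b d.-1 h6 (surj hk (ltnW hd)).
rewrite !(rank_X d hk) // !card_mon (@count_step d b d.-1) in F; try lia.
rewrite cnt_formula in F; try lia.
Qed.

Lemma main (k : closedFieldType) (hk : [pchar k]%R =i pred0) :
  (forall d : nat, odd d -> (3 <= d)%N ->
     Pilot.Defs.triv k d d.-1 = (d.-1 %/ 6)%N.+1 /\ Pilot.Defs.sign k d d.-1 = (d.-1 %/ 6)%N) /\
  (forall d : nat, ~~ odd d -> (4 <= d)%N ->
     Pilot.Defs.triv k d d.-1 = ((d + 2) %/ 6)%N /\ Pilot.Defs.sign k d d.-1 = ((d + 2) %/ 6)%N).
Proof.
have T : forall d, Pilot.Defs.triv k d d.-1 = \rank (KerEj k d d.-1 :&: Inv k d false) by [].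
have S : forall d, Pilot.Defs.sign k d d.-1 = \rank (KerEj k d d.-1 :&: Inv k d true) by [].
split => d hodd hd; rewrite T S !(main_count hk) //; try lia.
Qed.

End Aux.

Theorem lemma5p1 (k : closedFieldType) (hk : [pchar k]%R =i pred0) :
  (forall d : nat, odd d -> (3 <= d)%N ->
     triv k d d.-1 = (d.-1 %/ 6).+1 /\ sign k d d.-1 = d.-1 %/ 6) /\
  (forall d : nat, ~~ odd d -> (4 <= d)%N ->
     triv k d d.-1 = (d + 2) %/ 6 /\ sign k d d.-1 = (d + 2) %/ 6).
Proof. exact: Aux.main. Qed.
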